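(* Let $\mathbf{T}=(T_1,\dots,T_m)$ and $\mathbf{T}^0=(T^0_1,\dots,T^0_m)$ be real random vectors and $\mathcal{H}_0\subset[m]$ such that for every $i\in\mathcal{H}_0$, $(T_i,T_i^0\mid\mathbf{T}_{-i},\mathbf{T}^0_{-i})\stackrel{d}{=}(T_i^0,T_i\mid\mathbf{T}_{-i},\mathbf{T}^0_{-i})$. Define $g(t)=\hat f_0(t)/\hat f_{mix}(t)$, where $$\hat f_{mix}(t)=\frac{1}{2m}\sum_{i=1}^m\big[K_{h_{mix}}(t-T_i)+K_{h_{mix}}(t-T_i^0)\big],$$ $K_h(t)=h^{-1}K(t/h)$ for a symmetric kernel $K$ with $\int K=1$, $\int tK(t)dt=0$, $\int t^2K(t)dt<\infty$, and the bandwidth $h_{mix}=h_{mix}(\mathbf{T},\mathbf{T}^0)$ is invariant under every permutation of the $2m$ entries of $(T_1,\dots,T_m,T^0_1,\dots,T^0_m)$; and $\hat f_0$ is one of the following two estimators: (KN) with $\tilde T_i^0=T_i$ if $|T_i|\le|T_i^0|$ and $\tilde T_i^0=T_i^0$ otherwise, $\hat f_0(t)=\frac{1}{2m}\big[\sum_{i=1}^mK_{h_0}(t-\tilde T^0_i)+\sum_{i=1}^mK_{h_0}(t+\tilde T^0_i)\big]$, where $h_0$ is a function of $(\tilde{\mathbf{T}}^0,-\tilde{\mathbf{T}}^0)$ invariant under permutations of its $2m$ entries; (JC) with $(X_1,\dots,X_{2m})=(T_1,\dots,T_m,T^0_1,\dots,T^0_m)$, $\varphi_{2m}(s)=\frac1{2m}\sum_{j=1}^{2m}e^{\mathrm{i}sX_j}$,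 a fixed $\gamma\in(0,1/2)$, $\hat s=\inf\{s\in[0,\log(2m)]:|\varphi_{2m}(s)|=(2m)^{-\gamma}\}$, $\hat\sigma_0^2=-\frac{\frac{d}{ds}|\varphi_{2m}(s)|}{s|\varphi_{2m}(s)|}\big|_{s=\hat s}$, $\hat\mu_0=\frac{\mathrm{Re}(\varphi_{2m}(s))\mathrm{Im}(\varphi_{2m}'(s))-\mathrm{Re}(\varphi_{2m}'(s))\mathrm{Im}(\varphi_{2m}(s))}{|\varphi_{2m}(s)|^2}\big|_{s=\hat s}$, and $\hat f_0(t)=\phi_{\hat\sigma_0}(t-\hat\mu_0)$, the $\mathcal N(\hat\mu_0,\hat\sigma_0^2)$ density. Then $U_i=g(T_i)$ and $U_i^0=g(T_i^0)$ satisfy, for every $i\in\mathcal{H}_0$, $$(U_i,U_i^0\mid\mathbf{U}_{-i},\mathbf{U}^0_{-i})\stackrel{d}{=}(U_i^0,U_i\mid\mathbf{U}_{-i},\mathbf{U}^0_{-i}).$$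
   Context: $\mathbf{a}_{-i}$ denotes a vector with its $i$-th entry removed. In the paper $(\mathbf{T},\mathbf{T}^0)$ are the test and calibration samples produced by its one- or two-sample construction, which satisfy the stated null pairwise exchangeability. *)

(* Defs.v *)
From HB Require Import structures.
From mathcomp Require Import all_boot all_order all_algebra all_fingroup.
From mathcomp Require Import all_classical all_reals all_analysis.
Set Implicit Arguments. Unset Strict Implicit. Unset Printing Implicit Defensive.
Import Order.TTheory GRing.Theory Num.Def Num.Theory.
Local Open Scope classical_set_scope.
Local Open Scope ring_scope.

Section Defs.
Context {R : realType}.

Definition data2 (m : nat) := (('I_m -> R) * ('I_m -> R))%type.

(** Borel sigma-algebra on R^m x R^m: generated by the coordinate maps. *)
Definition coord_sets (m : nat) : set (set (data2 m)) :=
  [set A | exists (i : 'I_m) (B : set R), measurable B /\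
     (A = (fun p : data2 m => p.1 i) @^-1` B \/ A = (fun p : data2 m => p.2 i) @^-1` B)].
Definition borel2m (m : nat) : set (set (data2 m)) := <<s coord_sets (m:=m) >>.

Definition swap_at (m : nat) (i : 'I_m) (p : data2 m) : data2 m :=
  (fun j => if j == i then p.2 i else p.1 j,
   fun j => if j == i then p.1 i else p.2 j).

(** (V_i, V0_i | V_{-i}, V0_{-i}) =d (V0_i, V_i | V_{-i}, V0_{-i}),
    stated as invariance of the joint law of (V, V0) under swapping the
    i-th entries (equivalent to equality of the conditional laws). *)
Definition pair_exch {d} {Omega : measurableType d} (P : probability Omega R)
  (m : nat) (V : Omega -> data2 m) (i : 'I_m) : Prop :=
  forall A, borel2m A -> P (V @^-1` A) = P ((swap_at i \o V) @^-1` A).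

Definition cat2 (m : nat) (x y : 'I_m -> R) : 'I_(m + m) -> R :=
  fun k => match fintype.split k with inl i => x i | inr i => y i end.

Definition perm_invariant (n : nat) (h : ('I_n -> R) -> R) : Prop :=
  forall (s : {perm 'I_n}) (x : 'I_n -> R), h (x \o s) = h x.

Definition Kh (K : R -> R) (h t : R) : R := h^-1 * K (t / h).

Definition kernel_ok (K : R -> R) : Prop :=
  [/\ (forall t, K (- t) = K t),
      (lebesgue_measure : measure _ R).-integrable setT (EFin \o K),
      (\int[lebesgue_measure]_t (K t)%:E = 1)%E,
      (lebesgue_measure : measure _ R).-integrable setT (EFin \o (fun t => t * K t)) /\
        (\int[lebesgue_measure]_t (t * K t)%:E = 0)%E &
      (lebesgue_measure : measure _ R).-integrable setT (EFin \o (fun t => t ^+ 2 * K t))].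

Definition fmix (K : R -> R) (m : nat) (hmix : ('I_(m + m) -> R) -> R)
  (x y : 'I_m -> R) (t : R) : R :=
  let h := hmix (cat2 x y) in
  ((2 * m)%:R)^-1 * \sum_(i < m) (Kh K h (t - x i) + Kh K h (t - y i)).

Definition tildeT0 (m : nat) (x y : 'I_m -> R) (i : 'I_m) : R :=
  if `|x i| <= `|y i| then x i else y i.

Definition f0KN (K : R -> R) (m : nat) (h0 : ('I_(m + m) -> R) -> R)
  (x y : 'I_m -> R) (t : R) : R :=
  let tl := tildeT0 x y in
  let h := h0 (cat2 tl (fun i => - tl i)) in
  ((2 * m)%:R)^-1 * (\sum_(i < m) Kh K h (t - tl i) + \sum_(i < m) Kh K h (t + tl i)).

(** (JC) estimator. phi_{2m}(s) = Rephi s + i Imphi s. *)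
Definition Rephi (m : nat) (x y : 'I_m -> R) (s : R) : R :=
  ((2 * m)%:R)^-1 * \sum_(j < m + m) cos (s * cat2 x y j).
Definition Imphi (m : nat) (x y : 'I_m -> R) (s : R) : R :=
  ((2 * m)%:R)^-1 * \sum_(j < m + m) sin (s * cat2 x y j).
Definition absphi (m : nat) (x y : 'I_m -> R) (s : R) : R :=
  Num.sqrt (Rephi x y s ^+ 2 + Imphi x y s ^+ 2).

Definition shat (gamma : R) (m : nat) (x y : 'I_m -> R) : R :=
  inf [set s | 0 <= s <= ln (2 * m)%:R /\
               absphi x y s = ((2 * m)%:R) `^ (- gamma)].

Definition sigma2hat (gamma : R) (m : nat) (x y : 'I_m -> R) : R :=
  let s := shat gamma x y in
  - (derive1 (absphi x y) s) / (s * absphi x y s).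

Definition muhat (gamma : R) (m : nat) (x y : 'I_m -> R) : R :=
  let s := shat gamma x y in
  (Rephi x y s * derive1 (Imphi x y) s - derive1 (Rephi x y) s * Imphi x y s)
    / (absphi x y s ^+ 2).

Definition f0JC (gamma : R) (m : nat) (x y : 'I_m -> R) (t : R) : R :=
  normal_pdf (muhat gamma x y) (Num.sqrt (sigma2hat gamma x y)) t.

Definition gfun (K : R -> R) (m : nat) (hmix : ('I_(m + m) -> R) -> R)
  (f0 : ('I_m -> R) -> ('I_m -> R) -> R -> R) (x y : 'I_m -> R) (t : R) : R :=
  f0 x y t / fmix K hmix x y t.

Definition Umap (K : R -> R) (m : nat) (hmix : ('I_(m + m) -> R) -> R)
  (f0 : ('I_m -> R) -> ('I_m -> R) -> R -> R) (p : data2 m) : data2 m :=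
  (fun i => gfun K hmix f0 p.1 p.2 (p.1 i),
   fun i => gfun K hmix f0 p.1 p.2 (p.2 i)).

End Defs.

(* Main.v *)
Require Import Defs.
From HB Require Import structures.
From mathcomp Require Import all_boot all_order all_algebra all_fingroup.
From mathcomp Require Import all_classical all_reals all_analysis.
Import Order.TTheory GRing.Theory Num.Def Num.Theory.
Local Open Scope classical_set_scope.
Local Open Scope ring_scope.
Lemma cat2L (R : realType) m (x y : 'I_m -> R) j : cat2 x y (lshift m j) = x j.
Proof. by rewrite /cat2 (@unsplitK m m (inl j)). Qed.
Lemma cat2R (R : realType) m (x y : 'I_m -> R) j : cat2 x y (rshift m j) = y j.
Proof. by rewrite /cat2 (@unsplitK m m (inr j)). Qed.
Lemma cat2_perm (R : realType) m (i : 'I_m) (x y x' y' : 'I_m -> R) :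
  (forall j, j != i -> x' j = x j /\ y' j = y j) -> x' i = y i -> y' i = x i ->
  cat2 x' y' = cat2 x y \o tperm (lshift m i) (rshift m i).
Proof.
move=> Hj Hx Hy; apply: funext => k /=.
rewrite -(fintype.splitK k); case: (fintype.split k) => j /=.
- have [->|ne] := eqVneq j i.
    by rewrite tpermL cat2L cat2R.
  rewrite tpermD; last by rewrite eq_rlshift.
    by rewrite !cat2L (proj1 (Hj j ne)).
  by rewrite eq_lshift eq_sym.
- have [->|ne] := eqVneq j i.
    by rewrite tpermR cat2L cat2R.
  rewrite tpermD; last by rewrite eq_rshift eq_sym.
    by rewrite !cat2R (proj2 (Hj j ne)).
  by rewrite eq_lrshift.
Qed.
Section S.
Variable R : realType.
Variable m : nat.
Variable i : 'I_m.
Variables x y x' y' : 'I_m -> R.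
Hypothesis Hj : forall j, j != i -> x' j = x j /\ y' j = y j.
Hypothesis Hx : x' i = y i.
Hypothesis Hy : y' i = x i.

Lemma fmix_inv K hmix : perm_invariant hmix -> fmix K hmix x' y' = fmix K hmix x y.
Proof.
move=> hinv; apply: funext => t; rewrite /fmix (@cat2_perm _ _ _ _ _ _ _ Hj Hx Hy) hinv.
congr (_ * _); apply: eq_bigr => j _.
have [->|ne] := eqVneq j i; first by rewrite Hx Hy addrC.
by case: (Hj j ne) => -> ->.
Qed.

Lemma Rephi_inv : Rephi x' y' = Rephi x y.
Proof.
apply: funext => s; rewrite /Rephi (@cat2_perm _ _ _ _ _ _ _ Hj Hx Hy); congr (_ * _).
by rewrite [RHS](reindex_inj (@perm_inj _ (tperm (lshift m i) (rshift m i)))).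
Qed.

Lemma Imphi_inv : Imphi x' y' = Imphi x y.
Proof.
apply: funext => s; rewrite /Imphi (@cat2_perm _ _ _ _ _ _ _ Hj Hx Hy); congr (_ * _).
by rewrite [RHS](reindex_inj (@perm_inj _ (tperm (lshift m i) (rshift m i)))).
Qed.

Lemma f0JC_inv gamma : @f0JC R gamma m x' y' = f0JC gamma x y.
Proof.
by rewrite /f0JC /muhat /sigma2hat /shat /absphi Rephi_inv Imphi_inv.
Qed.

Lemma f0KN_inv K h0 : perm_invariant h0 -> f0KN K h0 x' y' = f0KN K h0 x y.
Proof.
move=> hinv; apply: funext => t; rewrite /f0KN.
set tl' := tildeT0 x' y'; set tl := tildeT0 x y.
have Htj : forall j, j != i -> tl' j = tl j.
  by move=> j ne; rewrite /tl' /tl /tildeT0; case: (Hj j ne) => -> ->.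
have [E|E] : tl' i = tl i \/ tl' i = - tl i.
  rewrite /tl' /tl /tildeT0 Hx Hy.
  have [lexy|ltyx] := leP `|x i| `|y i|.
    have [leyx|ltxy] := leP `|y i| `|x i|.
      have /eqP := le_anti (andb_true_intro (conj lexy leyx)).
      rewrite eqr_norm2 => /orP [/eqP->|/eqP->]; first by left.
      by right; rewrite opprK.
    by left.
  by rewrite (ltW ltyx); left.
- have -> : tl' = tl.
    apply: funext => j; have [->|ne] := eqVneq j i; [exact: E | exact: Htj].
  by [].
- rewrite (@cat2_perm R m i tl (fun j => - tl j) tl' (fun j => - tl' j)); last 3 first.
  + by move=> j ne; rewrite Htj.
  + exact: E.
  + by rewrite E opprK.
  rewrite hinv; congr (_ * _); rewrite -!big_split /=; apply: eq_bigr => j _.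
  have [->|ne] := eqVneq j i; first by rewrite E opprK addrC.
  by rewrite Htj.
Qed.
End S.

Lemma swap_hyps (R : realType) m (i : 'I_m) (p : data2 (R:=R) m) :
  [/\ (forall j, j != i -> (swap_at i p).1 j = p.1 j /\ (swap_at i p).2 j = p.2 j),
      (swap_at i p).1 i = p.2 i & (swap_at i p).2 i = p.1 i].
Proof.
split; last 2 first; [by rewrite /= eqxx | by rewrite /= eqxx |].
by move=> j ne; rewrite /= (negbTE ne).
Qed.

Lemma Umap_swap (R : realType) m (i : 'I_m) K hmix
  (f0 : ('I_m -> R) -> ('I_m -> R) -> R -> R) :
  perm_invariant hmix ->
  ((exists h0 : ('I_(m + m) -> R) -> R, perm_invariant h0 /\ f0 = f0KN K h0) \/
   (exists gamma : R, 0 < gamma < 2^-1 /\ f0 = @f0JC R gamma m)) ->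
  forall p, Umap K hmix f0 (swap_at i p) = swap_at i (Umap K hmix f0 p).
Proof.
move=> hinv hf0 p.
have [Hj Hx Hy] := @swap_hyps R m i p.
have G : gfun K hmix f0 (swap_at i p).1 (swap_at i p).2 = gfun K hmix f0 p.1 p.2.
  rewrite /gfun (@fmix_inv _ _ _ _ _ _ _ Hj Hx Hy K hmix hinv).
  have -> : f0 (swap_at i p).1 (swap_at i p).2 = f0 p.1 p.2; last by [].
  case: hf0 => [[h0 [h0i ->]]|[g [_ ->]]].
    exact: (@f0KN_inv _ _ _ _ _ _ _ Hj Hx Hy K h0 h0i).
  exact: (@f0JC_inv _ _ _ _ _ _ _ Hj Hx Hy g).
rewrite /Umap G /swap_at /=; congr pair; apply: funext => j; by case: ifP.
Qed.

Theorem proposition2 (R : realType) (d : measure_display) (Omega : measurableType d)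
  (P : probability Omega R) (m : nat) (T T0 : Omega -> 'I_m -> R) (H0 : {set 'I_m})
  (K : R -> R) (hmix : ('I_(m + m) -> R) -> R)
  (f0 : ('I_m -> R) -> ('I_m -> R) -> R -> R) :
  (forall i, measurable_fun setT (fun w => T w i)) ->
  (forall i, measurable_fun setT (fun w => T0 w i)) ->
  (forall i, i \in H0 -> pair_exch P (fun w => (T w, T0 w)) i) ->
  kernel_ok K ->
  perm_invariant hmix ->
  ((exists h0 : ('I_(m + m) -> R) -> R, perm_invariant h0 /\ f0 = f0KN K h0) \/
   (exists gamma : R, 0 < gamma < 2^-1 /\ f0 = @f0JC R gamma m)) ->
  (forall A, borel2m A -> borel2m (Umap K hmix f0 @^-1` A)) ->
  forall i, i \in H0 -> pair_exch P (fun w => Umap K hmix f0 (T w, T0 w)) i.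
Proof.
move=> _ _ Hex _ hinv hf0 Hmeas i iH A hA.
have := Hex i iH _ (Hmeas A hA).
rewrite /preimage /= => ->; congr (P _); apply: funext => w /=.
by rewrite (@Umap_swap _ _ i _ _ _ hinv hf0).
Qed.
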